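(* In the logic $\mathrm{q}\L^{*}$, for all formulas $p,q,r,t\in F(V)$: (1) if $\vdash p\leftrightarrow q$, then $\vdash\neg p\leftrightarrow\neg q$; (2) if $\vdash p\leftrightarrow q$ and $\vdash r\leftrightarrow t$, then $\vdash(p\to r)\leftrightarrow(q\to t)$; (3) if $\vdash p\leftrightarrow q$ and $\vdash q\leftrightarrow r$, then $\vdash p\leftrightarrow r$; (4) $\vdash\neg(p\to q)\leftrightarrow(\neg p\to\neg q)$; (5) $\vdash p\leftrightarrow p$; (6) if $\vdash p_1\leftrightarrow r_1$, then $\vdash p\leftrightarrow r$, where $p_1$ is a subformula of $p$ and $r$ is obtained by replacing $p_1$ in $p$ with $r_1$; (7) $\vdash(p\to p)\leftrightarrow(q\to q)$; (8) $\vdash\neg\neg(p\to p)\leftrightarrow(p\to p)$; (9) $\vdash p\leftrightarrow\neg\neg p$; (10) $\vdash(\neg p\to q)\leftrightarrow(\neg q\to p)$; (11) $\vdash(\neg p)^{+}\leftrightarrow\neg p^{-}$ and $\vdash(\neg p)^{-}\leftrightarrow\neg p^{+}$; (12) if $\vdash p\leftrightarrow q$, then $\vdash p^{+}\leftrightarrow q^{+}$ and $\vdash p^{-}\leftrightarrow q^{-}$.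
   Context: Let $V=\{p_1,p_2,\ldots\}$ be a set of propositional variables and $F(V)$ the set of formulas built from $V$ and the constant $1$ with the binary connective $\to$ and the unary connectives $\neg$, ${}^{+}$, ${}^{-}$ (postfix ${}^+,{}^-$ bind tighter than $\neg$, which binds tighter than $\to$; so $\neg p^{-}$ means $\neg(p^{-})$). Abbreviations: $p\vee q:=((p^{+}\to q^{+})^{+}\to(\neg p)^{-})\to((q^{-}\to p^{-})^{-}\to p^{-})$; an axiom written $A\leftrightarrow B$ stands for the two axioms $A\to B$ and $B\to A$, and $\vdash A\leftrightarrow B$ means $\vdash A\to B$ and $\vdash B\to A$. Axiom schemas of $\mathrm{q}\L^{*}$ (for all formulas $p,q,r$): (Q1) $(p\to q)\leftrightarrow(\neg q\to\neg p)$; (Q2) $1\leftrightarrow((1\to p)\to 1)$; (Q3) $p\leftrightarrow((q\to q)\to p)$; (Q4) $(p\to q)\leftrightarrow((q^{+}\to p^{-})\to(p^{+}\to q^{-}))$; (Q5) $\neg(p\to q)\leftrightarrow(q\to p)$; (Q6) $(p\to(\neg p\to q))^{+}\leftrightarrow(p^{+}\to(\neg p^{+}\to q^{+}))$; (Q7) $(p\to(q\vee r))\leftrightarrow((p\to r)\vee(p\to q))$; (Q8) $(p\vee(q\vee r))\leftrightarrow((p\vee q)\vee r)$; (Q9) $((p\to 1)\to((q\to 1)\to r))\to((q\to 1)\to((p\to 1)\to r))$; (Q10) $p\to 1$; (Q11) $((1\to 1)\to p^{+})\leftrightarrow((p\to 1)\to 1)$ and $((1\to 1)\to p^{-})\leftrightarrow((p\to\neg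 1)\to\neg 1)$. Deduction rules: (R1) from $p$ and $p\to q$ infer $(r\to r)\to q$; (R2) from $(r\to r)\to(p\to q)$ infer $p\to q$; (R3) from $p\to q$ and $r\to t$ infer $(q\to r)\to(p\to t)$. A proof of $q_n$ is a finite sequence $q_1,\dots,q_n$ of formulas each of which is an axiom or obtained from earlier members by a rule; then $\vdash q_n$. *)

(* Defs.v *)
(* Formulas F(V) over V = {p_1, p_2, ...} (indexed by nat), constant 1,
   binary ->, unary neg, ^+, ^- . *)
Inductive form : Type :=
| Var : nat -> form
| One : form
| Imp : form -> form -> form
| Neg : form -> form
| Plus : form -> form
| Minus : form -> form.

Definition Vee (p q : form) : form :=
  Imp (Imp (Plus (Imp (Plus p) (Plus q))) (Minus (Neg p)))
      (Imp (Minus (Imp (Minus q) (Minus p))) (Minus p)).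

(* Axiom schemas of qL*; each A <-> B gives two axioms A -> B and B -> A. *)
Inductive axiom : form -> Prop :=
| Q1a p q : axiom (Imp (Imp p q) (Imp (Neg q) (Neg p)))
| Q1b p q : axiom (Imp (Imp (Neg q) (Neg p)) (Imp p q))
| Q2a p : axiom (Imp One (Imp (Imp One p) One))
| Q2b p : axiom (Imp (Imp (Imp One p) One) One)
| Q3a p q : axiom (Imp p (Imp (Imp q q) p))
| Q3b p q : axiom (Imp (Imp (Imp q q) p) p)
| Q4a p q : axiom (Imp (Imp p q)
                       (Imp (Imp (Plus q) (Minus p)) (Imp (Plus p) (Minus q))))
| Q4b p q : axiom (Imp (Imp (Imp (Plus q) (Minus p)) (Imp (Plus p) (Minus q)))
                       (Imp p q))
| Q5a p q : axiom (Imp (Neg (Imp p q)) (Imp q p))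
| Q5b p q : axiom (Imp (Imp q p) (Neg (Imp p q)))
| Q6a p q : axiom (Imp (Plus (Imp p (Imp (Neg p) q)))
                       (Imp (Plus p) (Imp (Neg (Plus p)) (Plus q))))
| Q6b p q : axiom (Imp (Imp (Plus p) (Imp (Neg (Plus p)) (Plus q)))
                       (Plus (Imp p (Imp (Neg p) q))))
| Q7a p q r : axiom (Imp (Imp p (Vee q r)) (Vee (Imp p r) (Imp p q)))
| Q7b p q r : axiom (Imp (Vee (Imp p r) (Imp p q)) (Imp p (Vee q r)))
| Q8a p q r : axiom (Imp (Vee p (Vee q r)) (Vee (Vee p q) r))
| Q8b p q r : axiom (Imp (Vee (Vee p q) r) (Vee p (Vee q r)))
| Q9 p q r : axiom (Imp (Imp (Imp p One) (Imp (Imp q One) r))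
                        (Imp (Imp q One) (Imp (Imp p One) r)))
| Q10 p : axiom (Imp p One)
| Q11a p : axiom (Imp (Imp (Imp One One) (Plus p)) (Imp (Imp p One) One))
| Q11b p : axiom (Imp (Imp (Imp p One) One) (Imp (Imp One One) (Plus p)))
| Q11c p : axiom (Imp (Imp (Imp One One) (Minus p))
                      (Imp (Imp p (Neg One)) (Neg One)))
| Q11d p : axiom (Imp (Imp (Imp p (Neg One)) (Neg One))
                      (Imp (Imp One One) (Minus p))).

(* Provability |- : closure of the axioms under rules R1, R2, R3
   (equivalent to existence of a finite proof sequence). *)
Inductive provable : form -> Prop :=
| pr_ax p : axiom p -> provable p
| pr_R1 p q r : provable p -> provable (Imp p q) -> provable (Imp (Imp r r) q)
| pr_R2 p q r : provable (Imp (Imp r r) (Imp p q)) -> provable (Imp p q)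
| pr_R3 p q r t : provable (Imp p q) -> provable (Imp r t) ->
                  provable (Imp (Imp q r) (Imp p t)).

Definition piff (a b : form) : Prop := provable (Imp a b) /\ provable (Imp b a).

Inductive subformula (s : form) : form -> Prop :=
| sub_refl : subformula s s
| sub_impl p q : subformula s p -> subformula s (Imp p q)
| sub_impr p q : subformula s q -> subformula s (Imp p q)
| sub_neg p : subformula s p -> subformula s (Neg p)
| sub_plus p : subformula s p -> subformula s (Plus p)
| sub_minus p : subformula s p -> subformula s (Minus p).

(* replace a b p r : r is obtained from p by replacing (some occurrences of)
   the subformula a by b. *)
Inductive replace (a b : form) : form -> form -> Prop :=
| rep_hit : replace a b a b
| rep_keep p : replace a b p p
| rep_imp p q p' q' : replace a b p p' -> replace a b q q' ->
                      replace a b (Imp p q) (Imp p' q')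
| rep_neg p p' : replace a b p p' -> replace a b (Neg p) (Neg p')
| rep_plus p p' : replace a b p p' -> replace a b (Plus p) (Plus p')
| rep_minus p p' : replace a b p p' -> replace a b (Minus p) (Minus p').

(* Main.v *)
Require Import Defs.

Lemma mp p a b : provable p -> provable (Imp p (Imp a b)) -> provable (Imp a b).
Proof. intros H1 H2. apply (pr_R2 a b One). exact (pr_R1 _ _ One H1 H2). Qed.

Lemma tr3 a b c d : provable (Imp a b) -> provable (Imp b c) -> provable (Imp c d) ->
  provable (Imp a d).
Proof. intros H1 H2 H3. eapply mp; [exact H2|]. apply pr_R3; auto. Qed.

Lemma refl x : provable (Imp x x).
Proof.
  set (T := Imp One One).
  assert (H : provable (Imp x (Imp T (Imp T x)))).
  { eapply tr3. apply pr_ax, (Q3a x One). apply pr_ax, (Q3a (Imp T x) One).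
    apply pr_ax, (Q9 One One x). }
  eapply tr3. exact H. apply pr_ax, (Q3b (Imp T x) One). apply pr_ax, (Q3b x One).
Qed.

Lemma tr a b c : provable (Imp a b) -> provable (Imp b c) -> provable (Imp a c).
Proof. intros; eapply tr3; eauto using refl. Qed.

Lemma ptr p q r : piff p q -> piff q r -> piff p r.
Proof. intros [] []; split; eapply tr; eauto. Qed.

Lemma psym p q : piff p q -> piff q p.
Proof. intros []; split; auto. Qed.

Lemma pneg p q : piff p q -> piff (Neg p) (Neg q).
Proof. intros [H1 H2]; split; [eapply mp; [exact H2|] | eapply mp; [exact H1|]]; apply pr_ax, Q1a. Qed.

Lemma pimp p q r t : piff p q -> piff r t -> piff (Imp p r) (Imp q t).
Proof. intros [] []; split; apply pr_R3; auto. Qed.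

Lemma ax2 a b : axiom (Imp a b) -> axiom (Imp b a) -> piff a b.
Proof. split; apply pr_ax; auto. Qed.

Lemma pQ3 p : piff p (Imp (Imp One One) p).
Proof. apply ax2; constructor. Qed.

Lemma mono1 c p q : provable (Imp p q) -> provable (Imp (Imp (Imp p c) c) (Imp (Imp q c) c)).
Proof. intros H. apply pr_R3; [|apply refl]. apply pr_R3; auto using refl. Qed.

Lemma pplus p q : piff p q -> piff (Plus p) (Plus q).
Proof.
  assert (forall p q, provable (Imp p q) -> provable (Imp (Plus p) (Plus q))).
  { intros a b H. eapply tr. apply pr_ax, (Q3a _ One).
    eapply tr. apply pr_ax, Q11a. eapply tr. apply mono1, H.
    eapply tr. apply pr_ax, Q11b. apply pr_ax, Q3b. }
  intros []; split; auto.
Qed.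

Lemma pminus p q : piff p q -> piff (Minus p) (Minus q).
Proof.
  assert (forall p q, provable (Imp p q) -> provable (Imp (Minus p) (Minus q))).
  { intros a b H. eapply tr. apply pr_ax, (Q3a _ One).
    eapply tr. apply pr_ax, Q11c. eapply tr. apply mono1, H.
    eapply tr. apply pr_ax, Q11d. apply pr_ax, Q3b. }
  intros []; split; auto.
Qed.

Lemma prefl p : piff p p.
Proof. split; apply refl. Qed.

Lemma pQ1 p q : piff (Imp p q) (Imp (Neg q) (Neg p)).
Proof. apply ax2; constructor. Qed.
Lemma pQ5 p q : piff (Neg (Imp p q)) (Imp q p).
Proof. apply ax2; constructor. Qed.

Lemma pnn p : piff p (Neg (Neg p)).
Proof.
  assert (forall a b, piff (Imp a b) (Neg (Neg (Imp a b)))).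
  { intros a b. apply psym. eapply ptr. apply pneg, pQ5. apply pQ5. }
  eapply ptr. apply pQ3. eapply ptr. apply H. apply pneg, pneg, psym, pQ3.
Qed.

Lemma prep p1 r1 p r : piff p1 r1 -> replace p1 r1 p r -> piff p r.
Proof.
  intros H R; induction R; auto using prefl, pimp, pneg, pplus, pminus.
Qed.

Lemma p4 p q : piff (Neg (Imp p q)) (Imp (Neg p) (Neg q)).
Proof. exact (ptr _ _ _ (pQ5 p q) (pQ1 q p)). Qed.

Lemma p7 p q : piff (Imp p p) (Imp q q).
Proof. split; [exact (pr_R1 _ _ p (refl q) (refl _)) | exact (pr_R1 _ _ q (refl p) (refl _))]. Qed.

Lemma p10 p q : piff (Imp (Neg p) q) (Imp (Neg q) p).
Proof. eapply ptr. apply pQ1. apply pimp. apply prefl. apply psym, pnn. Qed.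

Lemma p11a p : piff (Plus (Neg p)) (Neg (Minus p)).
Proof.
  eapply ptr. apply pQ3. eapply ptr. apply (ax2 _ _ (Q11a (Neg p)) (Q11b (Neg p))).
  eapply ptr. apply pQ1. eapply ptr. apply pimp. apply prefl. apply pQ5.
  apply psym.
  eapply ptr. apply pneg, pQ3. eapply ptr. apply pneg, (ax2 _ _ (Q11c p) (Q11d p)).
  eapply ptr. apply pQ5. apply pimp. apply prefl.
  eapply ptr. apply pQ1. apply pimp. apply psym, pnn. apply prefl.
Qed.

Lemma p11b p : piff (Minus (Neg p)) (Neg (Plus p)).
Proof.
  eapply ptr. apply pQ3. eapply ptr. apply (ax2 _ _ (Q11c (Neg p)) (Q11d (Neg p))).
  eapply ptr. apply pimp. apply psym, (pQ1 One p). apply prefl.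
  eapply ptr. apply pQ1. eapply ptr. apply pimp. apply psym, pnn. apply pQ5.
  apply psym.
  eapply ptr. apply pneg, pQ3. eapply ptr. apply pneg, (ax2 _ _ (Q11a p) (Q11b p)).
  apply pQ5.
Qed.

Theorem proposition5p1 :
  (* (1) *)
  (forall p q : form, piff p q -> piff (Neg p) (Neg q)) /\
  (* (2) *)
  (forall p q r t : form, piff p q -> piff r t -> piff (Imp p r) (Imp q t)) /\
  (* (3) *)
  (forall p q r : form, piff p q -> piff q r -> piff p r) /\
  (* (4) *)
  (forall p q : form, piff (Neg (Imp p q)) (Imp (Neg p) (Neg q))) /\
  (* (5) *)
  (forall p : form, piff p p) /\
  (* (6) *)
  (forall p p1 r r1 : form, piff p1 r1 -> subformula p1 p ->
     replace p1 r1 p r -> piff p r) /\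
  (* (7) *)
  (forall p q : form, piff (Imp p p) (Imp q q)) /\
  (* (8) *)
  (forall p : form, piff (Neg (Neg (Imp p p))) (Imp p p)) /\
  (* (9) *)
  (forall p : form, piff p (Neg (Neg p))) /\
  (* (10) *)
  (forall p q : form, piff (Imp (Neg p) q) (Imp (Neg q) p)) /\
  (* (11) *)
  (forall p : form, piff (Plus (Neg p)) (Neg (Minus p)) /\
                    piff (Minus (Neg p)) (Neg (Plus p))) /\
  (* (12) *)
  (forall p q : form, piff p q -> piff (Plus p) (Plus q) /\ piff (Minus p) (Minus q)).
Proof.
  split. exact pneg.
  split. exact pimp.
  split. exact ptr.
  split. exact p4.
  split. exact prefl.
  split. intros p p1 r r1 H _ R. exact (prep _ _ _ _ H R).
  split. exact p7.
  split. intros p; apply psym, pnn.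
  split. exact pnn.
  split. exact p10.
  split. intros p; split; [apply p11a | apply p11b].
  intros p q H; split; [apply pplus | apply pminus]; exact H.
Qed.
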